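(* Let $\epsilon\in\mathbb{Z}_2^*$, $\lambda\in\mathcal{O}_D$ and $t\ge2$ an integer. If $r\in\mathcal{O}_D$ satisfies $j+ij=r(j+ij)\bar r+\epsilon2^t\lambda(j+ij)\bar\lambda$, or satisfies $i+j=r(i+j)\bar r+\epsilon2^t\lambda(i+j)\bar\lambda$, then $1-r\in i\mathcal{O}_D$.
   Context: $D=\left(\frac{2,5}{\mathbb{Q}_2}\right)$ is the quaternion division algebra over $\mathbb{Q}_2$ with basis $1,i,j,ij$, $i^2=2$, $j^2=5$, $ij=-ji$; $q\mapsto\bar q$ is the canonical involution and $\mathcal{O}_D$ the maximal order (equal to $\mathbb{Z}_2\oplus\mathbb{Z}_2\omega\oplus\mathbb{Z}_2i\oplus\mathbb{Z}_2i\omega$, $\omega=(1+j)/2$). *)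

(* Defs.v *)
From mathcomp Require Import all_boot.
Set Implicit Arguments. Unset Strict Implicit. Unset Printing Implicit Defensive.

(* The 2-adic integers Z_2 = lim Z/2^n Z, an element being the         *)
(* compatible sequence of its canonical residues x_n in [0, 2^n).      *)
(* Leibniz equality = equality of 2-adic integers (with funext).       *)
Record Z2 := MkZ2 {
  z2 : nat -> nat ;
  z2_lt : forall n, z2 n < 2 ^ n ;
  z2_compat : forall n, z2 n.+1 %% 2 ^ n = z2 n }.

Lemma expn2_gt0 n : 0 < 2 ^ n. Proof. by rewrite expn_gt0. Qed.

Lemma dvd2S n : 2 ^ n %| 2 ^ n.+1.
Proof. by rewrite dvdn_exp2l. Qed.

Lemma mod2S m n : m %% 2 ^ n.+1 %% 2 ^ n = m %% 2 ^ n.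
Proof. by rewrite modn_dvdm // dvd2S. Qed.

Definition Z2nat (m : nat) : Z2.
Proof.
refine (@MkZ2 (fun n => m %% 2 ^ n) _ _).
- by move=> n; rewrite ltn_pmod // expn2_gt0.
- by move=> n; rewrite mod2S.
Defined.

Definition Z2add (x y : Z2) : Z2.
Proof.
refine (@MkZ2 (fun n => (z2 x n + z2 y n) %% 2 ^ n) _ _).
- by move=> n; rewrite ltn_pmod // expn2_gt0.
- move=> n; rewrite mod2S -modnDm !z2_compat; done.
Defined.

Definition Z2mul (x y : Z2) : Z2.
Proof.
refine (@MkZ2 (fun n => (z2 x n * z2 y n) %% 2 ^ n) _ _).
- by move=> n; rewrite ltn_pmod // expn2_gt0.
- move=> n; rewrite mod2S -modnMm !z2_compat; done.
Defined.

Definition Z2m1 : Z2.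
Proof.
refine (@MkZ2 (fun n => (2 ^ n).-1) _ _).
- by move=> n; rewrite prednK // expn2_gt0.
- move=> n; have h := expn2_gt0 n.
  rewrite expnS mul2n -addnn -{2}(prednK h) addnS /= modnDl modn_small //.
  by rewrite prednK.
Defined.

Definition Z2opp (x : Z2) : Z2 := Z2mul Z2m1 x.
Definition Z2zero : Z2 := Z2nat 0.
Definition Z2one : Z2 := Z2nat 1.

Definition Z2unit (e : Z2) : Prop := exists e', Z2mul e e' = Z2one.

(* Z_2[omega], omega = (1+j)/2, omega^2 = omega + 1 (since j^2 = 5);   *)
(* a pair (a, b) stands for a + b omega.  Its nontrivial automorphism  *)
(* (restriction of the canonical involution of D) sends omega to      *)
(* 1 - omega.                                                          *)
Definition Zw := (Z2 * Z2)%type.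
Definition Zwadd (x y : Zw) : Zw := (Z2add x.1 y.1, Z2add x.2 y.2).
Definition Zwmul (x y : Zw) : Zw :=
  (Z2add (Z2mul x.1 y.1) (Z2mul x.2 y.2),
   Z2add (Z2add (Z2mul x.1 y.2) (Z2mul x.2 y.1)) (Z2mul x.2 y.2)).
Definition Zwbar (x : Zw) : Zw := (Z2add x.1 x.2, Z2opp x.2).
Definition Zwopp (x : Zw) : Zw := (Z2opp x.1, Z2opp x.2).
Definition Zwsc (a : Z2) : Zw := (a, Z2zero).

(* The maximal order O_D = Z_2 + Z_2 omega + Z_2 i + Z_2 i omega of    *)
(* D = (2,5 / Q_2).  A pair (alpha, beta) of Zw stands for             *)
(* alpha + i beta.  Using i^2 = 2 and alpha i = i (bar alpha) (from    *)
(* ij = -ji), the product and the canonical involution of D are:       *)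
(*  (a1 + i b1)(a2 + i b2) = (a1 a2 + 2 bar(b1) b2) + i(bar(a1) b2 + b1 a2) *)
(*  bar(a + i b) = bar(a) - i b.                                       *)
Definition OD := (Zw * Zw)%type.
Definition ODadd (x y : OD) : OD := (Zwadd x.1 y.1, Zwadd x.2 y.2).
Definition ODopp (x : OD) : OD := (Zwopp x.1, Zwopp x.2).
Definition ODsub (x y : OD) : OD := ODadd x (ODopp y).
Definition ODmul (x y : OD) : OD :=
  (Zwadd (Zwmul x.1 y.1) (Zwmul (Zwsc (Z2nat 2)) (Zwmul (Zwbar x.2) y.2)),
   Zwadd (Zwmul (Zwbar x.1) y.2) (Zwmul x.2 y.1)).
Definition ODbar (x : OD) : OD := (Zwbar x.1, Zwopp x.2).
Definition ODsc (a : Z2) : OD := (Zwsc a, Zwsc Z2zero).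
Definition ODone : OD := ODsc Z2one.

(* the quaternion units: i, and j = 2 omega - 1, and ij *)
Definition Qi : OD := (Zwsc Z2zero, Zwsc Z2one).
Definition Qj : OD := ((Z2m1, Z2nat 2), Zwsc Z2zero).
Definition Qij : OD := ODmul Qi Qj.

Definition in_iOD (x : OD) : Prop := exists s : OD, x = ODmul Qi s.

(* Main.v *)
Require Import Defs.
From mathcomp Require Import all_boot.
From Stdlib Require Import ProofIrrelevance FunctionalExtensionality.

Definition a2 (a b : nat) := (a + b) %% 2 ^ 1.
Definition m2 (a b : nat) := (a * b) %% 2 ^ 1.
Definition n2 (m : nat) := m %% 2 ^ 1.
Definition mm1 : nat := (2 ^ 1).-1.
Definition o2 x := m2 mm1 x.
Definition W := (nat * nat)%type.
Definition Wadd (x y : W) : W := (a2 x.1 y.1, a2 x.2 y.2).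
Definition Wmul (x y : W) : W :=
  (a2 (m2 x.1 y.1) (m2 x.2 y.2),
   a2 (a2 (m2 x.1 y.2) (m2 x.2 y.1)) (m2 x.2 y.2)).
Definition Wbar (x : W) : W := (a2 x.1 x.2, o2 x.2).
Definition Wopp (x : W) : W := (o2 x.1, o2 x.2).
Definition Wsc (a : nat) : W := (a, n2 0).
Definition O2 := (W * W)%type.
Definition Oadd (x y : O2) : O2 := (Wadd x.1 y.1, Wadd x.2 y.2).
Definition Oopp (x : O2) : O2 := (Wopp x.1, Wopp x.2).
Definition Osub (x y : O2) : O2 := Oadd x (Oopp y).
Definition Omul (x y : O2) : O2 :=
  (Wadd (Wmul x.1 y.1) (Wmul (Wsc (n2 2)) (Wmul (Wbar x.2) y.2)),
   Wadd (Wmul (Wbar x.1) y.2) (Wmul x.2 y.1)).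
Definition Obar (x : O2) : O2 := (Wbar x.1, Wopp x.2).
Definition Osc (a : nat) : O2 := (Wsc a, Wsc (n2 0)).
Definition Oone : O2 := Osc (n2 1).
Definition Pi : O2 := (Wsc (n2 0), Wsc (n2 1)).
Definition Pj : O2 := ((mm1, n2 2), Wsc (n2 0)).
Definition Pij : O2 := Omul Pi Pj.

Definition red (x : Z2) := z2 x 1.
Definition rw (x : Zw) : W := (red x.1, red x.2).
Definition ro (x : OD) : O2 := (rw x.1, rw x.2).

Lemma roAdd x y : ro (ODadd x y) = Oadd (ro x) (ro y). Proof. by []. Qed.
Lemma roMul x y : ro (ODmul x y) = Omul (ro x) (ro y). Proof. by []. Qed.
Lemma roBar x : ro (ODbar x) = Obar (ro x). Proof. by []. Qed.
Lemma roSc x : ro (ODsc x) = Osc (red x). Proof. by []. Qed.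
Lemma roSub x y : ro (ODsub x y) = Osub (ro x) (ro y). Proof. by []. Qed.
Lemma roQi : ro Qi = Pi. Proof. by []. Qed.
Lemma roQj : ro Qj = Pj. Proof. by []. Qed.
Lemma roQij : ro Qij = Pij. Proof. by []. Qed.
Lemma roOne : ro ODone = Oone. Proof. by []. Qed.

Lemma red_lt x : red x < 2. Proof. exact: (z2_lt x 1). Qed.

Lemma finite : forall a, a < 2 -> forall b, b < 2 -> forall c, c < 2 -> forall d, d < 2 ->
  forall e, e < 2 -> forall f, f < 2 -> forall g, g < 2 -> forall h, h < 2 ->
  let R := ((a, b), (c, d)) in let L := ((e, f), (g, h)) in
  (Oadd Pj Pij == Oadd (Omul (Omul R (Oadd Pj Pij)) (Obar R))
           (Omul (Osc 0) (Omul (Omul L (Oadd Pj Pij)) (Obar L)))) ||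
  (Oadd Pi Pj == Oadd (Omul (Omul R (Oadd Pi Pj)) (Obar R))
           (Omul (Osc 0) (Omul (Omul L (Oadd Pi Pj)) (Obar L)))) ->
  (Osub Oone R).1 = (0, 0).
Proof.
do 8 (case=> [|[|?]] ? //); vm_compute; by [].
Qed.

Lemma Z2ext (x y : Z2) : (forall n, z2 x n = z2 y n) -> x = y.
Proof.
case: x y => f lf cf [g lg cg] /= E.
have efg : f = g by apply: functional_extensionality.
subst g; f_equal; apply: proof_irrelevance.
Qed.

Lemma Z2add0 x : Z2add x Z2zero = x.
Proof. apply: Z2ext => n /=; rewrite mod0n addn0 modn_small //; exact: z2_lt. Qed.
Lemma Z2add0l x : Z2add Z2zero x = x.
Proof. apply: Z2ext => n /=; rewrite mod0n add0n modn_small //; exact: z2_lt. Qed.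
Lemma Z2mul0 x : Z2mul Z2zero x = Z2zero.
Proof. by apply: Z2ext => n /=; rewrite !mod0n ?mul0n ?mod0n. Qed.
Lemma Z2mul1 x : Z2mul Z2one x = x.
Proof. apply: Z2ext => n /=; rewrite modnMml mul1n modn_small //; exact: z2_lt. Qed.
Lemma Z2opp0 : Z2opp Z2zero = Z2zero.
Proof. by apply: Z2ext => n /=; rewrite !mod0n ?muln0 ?mod0n. Qed.

Lemma z2_mod (x : Z2) m n : m <= n -> z2 x n %% 2 ^ m = z2 x m.
Proof.
elim: n => [|n IH] le.
  by move: le; rewrite leqn0 => /eqP ->; rewrite modn_small // z2_lt.
move: le; rewrite leq_eqVlt => /orP [/eqP -> | lt]; first by rewrite modn_small // z2_lt.
by rewrite -(modn_dvdm (z2 x n.+1) (@dvdn_exp2l 2 m n lt)) z2_compat IH.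
Qed.

Lemma halve (x : Z2) : red x = 0 -> exists y, x = Z2mul (Z2nat 2) y.
Proof.
move=> h0.
have ev : forall n, 2 %| z2 x n.+1.
  by move=> n; rewrite /dvdn -{1}(expn1 2) z2_mod //; apply/eqP; exact: h0.
have lt : forall n, z2 x n.+1 %/ 2 < 2 ^ n.
  by move=> n; rewrite ltn_divLR // mulnC -expnS z2_lt.
have cp : forall n, z2 x n.+2 %/ 2 %% 2 ^ n = z2 x n.+1 %/ 2.
  move=> n; rewrite -(z2_compat x n.+1) -{2}(divnK (ev n.+1)).
  by rewrite expnSr -muln_modl mulnK.
exists (MkZ2 lt cp); apply: Z2ext => n /=.
rewrite modnMml mulnC divnK //.
by rewrite z2_mod.
Qed.

Theorem lemma5p5 (eps : Z2) (lam r : OD) (t : nat) :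
  Z2unit eps -> 2 <= t ->
  (ODadd Qj Qij =
     ODadd (ODmul (ODmul r (ODadd Qj Qij)) (ODbar r))
           (ODmul (ODsc (Z2mul eps (Z2nat (2 ^ t))))
                  (ODmul (ODmul lam (ODadd Qj Qij)) (ODbar lam)))
   \/
   ODadd Qi Qj =
     ODadd (ODmul (ODmul r (ODadd Qi Qj)) (ODbar r))
           (ODmul (ODsc (Z2mul eps (Z2nat (2 ^ t))))
                  (ODmul (ODmul lam (ODadd Qi Qj)) (ODbar lam)))) ->
  in_iOD (ODsub ODone r).
Proof.
move=> _ t2 H.
have Hs : red (Z2mul eps (Z2nat (2 ^ t))) = 0.
  rewrite /red /=.
  have -> : 2 ^ t = 2 ^ t.-1 * 2 by rewrite -expnSr prednK // (leq_trans _ t2).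
  by rewrite modnMl muln0.
have key : (ro (ODsub ODone r)).1 = (0, 0).
  rewrite roSub roOne.
  have D : (Oadd Pj Pij == Oadd (Omul (Omul (ro r) (Oadd Pj Pij)) (Obar (ro r)))
           (Omul (Osc 0) (Omul (Omul (ro lam) (Oadd Pj Pij)) (Obar (ro lam))))) ||
  (Oadd Pi Pj == Oadd (Omul (Omul (ro r) (Oadd Pi Pj)) (Obar (ro r)))
           (Omul (Osc 0) (Omul (Omul (ro lam) (Oadd Pi Pj)) (Obar (ro lam))))).
    case: H => /(congr1 ro); rewrite !roAdd !roMul !roBar roSc Hs ?roQj ?roQij ?roQi => E;
      apply/orP; [left|right]; apply/eqP; exact: E.
  exact: (finite _ (red_lt r.1.1) _ (red_lt r.1.2) _ (red_lt r.2.1) _ (red_lt r.2.2)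
           _ (red_lt lam.1.1) _ (red_lt lam.1.2) _ (red_lt lam.2.1) _ (red_lt lam.2.2) D).
move: (ODsub ODone r) key => [[u v] w] [hu hv].
have [y1 ->] := halve _ hu.
have [y2 ->] := halve _ hv.
exists (w, (y1, y2)).
rewrite /ODmul /Qi /Zwsc /Zwmul /Zwbar /Zwadd /Z2opp; cbn [fst snd].
rewrite ?Z2mul0 ?Z2mul1 ?Z2add0 ?Z2add0l -/(Z2opp Z2zero) ?Z2opp0 ?Z2mul0 ?Z2add0 ?Z2add0l ?Z2mul1.
by case: w.
Qed.
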